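(* Every $\gamma_{\rm tg}$-critical graph is open twin-free.
   Context: A graph is open twin-free if it has no two distinct vertices $u,v$ with $N(u)=N(v)$. Total domination game on a graph without isolated vertices: Dominator and Staller alternately choose vertices, each chosen vertex must be adjacent to some vertex not yet totally dominated; the game ends when no legal move exists; Dominator minimizes, Staller maximizes the number of moves; $\gamma_{\rm tg}(G)$ is the number of moves in the Dominator-start game under optimal play. $G|v$ is $G$ with $v$ declared already totally dominated, with $\gamma_{\rm tg}(G|v)$ defined analogously. $G$ is $\gamma_{\rm tg}$-critical if $\gamma_{\rm tg}(G|v)<\gamma_{\rm tg}(G)$ for every vertex $v$. *)

(* Defs.v *)
From mathcomp Require Import all_boot.
Set Implicit Arguments. Unset Strict Implicit. Unset Printing Implicit Defensive.

(* A finite simple graph on vertex set T is a symmetric irreflexive relation e. *)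

Definition nbh (T : finType) (e : rel T) (x : T) : {set T} := [set y | e x y].

(* Game state: D = set of vertices already totally dominated; dom = true iff
   it is Dominator's turn.  A vertex x is a legal move iff N(x) contains a
   vertex not yet totally dominated, i.e. ~~ (nbh x \subset D); playing x
   replaces D by D :|: nbh x.  gval n D dom is the number of moves still to be
   played under optimal play (Dominator minimizes, Staller maximizes), computed
   with fuel n.  Each move strictly enlarges D, so at most #|T| moves remain and
   fuel #|T|.+1 is always sufficient. *)
Fixpoint gval (T : finType) (e : rel T) (n : nat) (D : {set T}) (dom : bool)
  : nat :=
  if n is n'.+1 then
    if [exists x, ~~ (nbh e x \subset D)] then
      if dom then
        \big[minn/#|T|.+1]_(x | ~~ (nbh e x \subset D)) (gval e n' (D :|: nbh e x) false).+1
      else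
        \big[maxn/0]_(x | ~~ (nbh e x \subset D)) (gval e n' (D :|: nbh e x) true).+1
    else 0
  else 0.

Definition gamma_tg (T : finType) (e : rel T) : nat := gval e #|T|.+1 set0 true.

(* gamma_tg(G|v): Dominator-start game with v declared already totally dominated *)
Definition gamma_tg_at (T : finType) (e : rel T) (v : T) : nat :=
  gval e #|T|.+1 [set v] true.

Definition gamma_tg_critical (T : finType) (e : rel T) : Prop :=
  forall v : T, gamma_tg_at e v < gamma_tg e.

Definition open_twin_free (T : finType) (e : rel T) : Prop :=
  forall u v : T, u != v -> nbh e u != nbh e v.

(* Main.v *)
Require Import Defs.
From mathcomp Require Import all_boot.

Section Twin.
Variables (T : finType) (e : rel T) (e_sym : symmetric e) (u v : T).
Hypothesis nuv : u != v.
Hypothesis Nuv : nbh e u = nbh e v.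

Lemma exu x : e x u = e x v.
Proof.
have : (x \in nbh e u) = (x \in nbh e v) by rewrite Nuv.
by rewrite !inE (e_sym u x) (e_sym v x).
Qed.

Lemma sub_eq (D : {set T}) x : (u \in D) = (v \in D) ->
  (nbh e x \subset u |: D) = (nbh e x \subset D).
Proof.
move=> H; apply/idP/idP => sub; last exact: subset_trans sub (subsetUr _ _).
apply/subsetP => y yN; have := subsetP sub y yN; rewrite in_setU1.
case/orP => [/eqP yu|//]; subst y.
have vN : v \in nbh e x by move: yN; rewrite !inE exu.
have := subsetP sub v vN; rewrite in_setU1 eq_sym (negbTE nuv) /= -H => uD.
by [].
Qed.

Lemma inv_pres (D : {set T}) x : (u \in D) = (v \in D) ->
  (u \in D :|: nbh e x) = (v \in D :|: nbh e x).
Proof. by move=> H; rewrite !in_setU H !inE exu. Qed.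

Lemma gval_twin n : forall (D : {set T}) (dom : bool), (u \in D) = (v \in D) ->
  gval e n (u |: D) dom = gval e n D dom.
Proof.
elim: n => [//|n IH] D dom H /=.
have S x := sub_eq D x H.
have -> : [exists x, ~~ (nbh e x \subset u |: D)] = [exists x, ~~ (nbh e x \subset D)].
  by apply: eq_existsb => x; rewrite S.
case: ifP => // _; case: dom.
- apply: eq_big => [x|x _]; first by rewrite S.
  by rewrite -setUA IH //; exact: (inv_pres D x H).
- apply: eq_big => [x|x _]; first by rewrite S.
  by rewrite -setUA IH //; exact: (inv_pres D x H).
Qed.
End Twin.

Theorem corollary4p3 (T : finType) (e : rel T)
  (e_sym : symmetric e) (e_irr : irreflexive e)
  (no_isolated : forall x : T, exists y : T, e x y) :
  gamma_tg_critical e -> open_twin_free e.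
Proof.
move=> crit u v nuv; apply/negP => /eqP Nuv.
have := crit u; rewrite /gamma_tg_at /gamma_tg.
have -> : [set u] = u |: (set0 : {set T}) by rewrite setU0.
by rewrite (@gval_twin T e e_sym u v nuv Nuv) ?inE // ltnn.
Qed.
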